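(* Let $R$ be a ring, and let $A$ and $B$ be $R$-algebras that are integral domains. Assume that $A$ is of finite expansion over $R$ and that $B$ is normal, and let $\mathfrak{p} \subset B$ be a prime ideal. Let $\phi: A \to B_\mathfrak{p}$ be a homomorphism of $R$-algebras. Then there exists $f \in B \setminus \mathfrak{p}$ such that $\phi$ factors as $A \to B_f \to B_\mathfrak{p}$, where $B_f \to B_\mathfrak{p}$ is the canonical localization map.
   Context: An $R$-algebra $A$ is of finite expansion over $R$ if there exist finitely many elements $a_1,\dots,a_n \in A$ such that $A$ is integral over the subalgebra $R[a_1,\dots,a_n]$. A domain is normal if it is integrally closed in its field of fractions. *)

(* Defs.v *)
From HB Require Import structures.
From mathcomp Require Import all_boot all_order all_algebra.
From mathcomp Require Import fraction ring_quotient.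
Set Implicit Arguments. Unset Strict Implicit. Unset Printing Implicit Defensive.
Import GRing.Theory.
Local Open Scope ring_scope.

(* An R-algebra A is encoded by its structure morphism iA : R -> A. *)

Inductive gen_subalg (R : comNzRingType) (A : comNzRingType)
    (iA : {rmorphism R -> A}) (n : nat) (a : 'I_n -> A) : A -> Prop :=
  | gen_scalar r : gen_subalg iA a (iA r)
  | gen_var i : gen_subalg iA a (a i)
  | gen_add x y : gen_subalg iA a x -> gen_subalg iA a y -> gen_subalg iA a (x + y)
  | gen_opp x : gen_subalg iA a x -> gen_subalg iA a (- x)
  | gen_mul x y : gen_subalg iA a x -> gen_subalg iA a y -> gen_subalg iA a (x * y).

Definition integral_over_subring (A : comNzRingType) (S : A -> Prop) (x : A) : Prop :=
  exists2 q : {poly A}, (q \is monic) /\ (forall i, S q`_i) & root q x.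

Definition finite_expansion (R A : comNzRingType) (iA : {rmorphism R -> A}) : Prop :=
  exists n (a : 'I_n -> A), forall x : A, integral_over_subring (gen_subalg iA a) x.

Definition normal_domain (B : idomainType) : Prop :=
  forall x : {fraction B}, integralOver (@FracField.tofrac B) x -> exists b : B, x = FracField.tofrac b.

(* Localization B_p of a domain B at a prime p, realized as the subring
   {b/s | s \notin p} of the fraction field of B. *)
Definition in_loc_prime (B : idomainType) (p : {pred B}) (x : {fraction B}) : Prop :=
  exists b s : B, s \notin p /\ x = FracField.tofrac b / FracField.tofrac s.

(* Localization B_f = B[1/f], realized as the subring {b/f^n} of Frac(B). *)
Definition in_loc_elem (B : idomainType) (f : B) (x : {fraction B}) : Prop :=
  exists (b : B) (n : nat), x = FracField.tofrac b / FracField.tofrac (f ^+ n).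

(* Main.v *)
Require Import Defs.
From HB Require Import structures.
From mathcomp Require Import all_boot all_order all_algebra.
From mathcomp Require Import fraction ring_quotient.
From mathcomp Require Import ring.
Import GRing.Theory.
Local Open Scope ring_scope.

Section Aux.
Variable B : idomainType.
Local Notation K := {fraction B}.
Local Notation t := (@FracField.tofrac B).

Definition Dn (f : B) (x : K) := exists m (b : B), t f ^+ m * x = t b.

Lemma t_inj : injective t.
Proof. by move=> x y /eqP; rewrite tofrac_eq => /eqP. Qed.

Lemma D_t f b : Dn f (t b).
Proof. by exists 0%N, b; rewrite expr0 mul1r. Qed.

Lemma D_add f x y : Dn f x -> Dn f y -> Dn f (x + y).
Proof.
move=> [m1 [b1 E1]] [m2 [b2 E2]]; exists (m1 + m2)%N, (f ^+ m2 * b1 + f ^+ m1 * b2).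
rewrite tofracD !tofracM !tofracXn -E1 -E2 exprD; ring.
Qed.

Lemma D_opp f x : Dn f x -> Dn f (- x).
Proof. by move=> [m [b E]]; exists m, (- b); rewrite mulrN E tofracN. Qed.

Lemma D_mul f x y : Dn f x -> Dn f y -> Dn f (x * y).
Proof.
move=> [m1 [b1 E1]] [m2 [b2 E2]]; exists (m1 + m2)%N, (b1 * b2).
rewrite exprD tofracM -E1 -E2; ring.
Qed.

Lemma D_unif f (c : nat -> K) N : (forall i, Dn f (c i)) ->
  exists M, forall i, (i < N)%N -> exists b, t f ^+ M * c i = t b.
Proof.
move=> H; elim: N => [|N [M IH]]; first by exists 0%N.
have [m [b E]] := H N.
exists (M + m)%N => i; rewrite ltnS leq_eqVlt => /orP [/eqP ->|/IH [b' E']].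
  by exists (f ^+ M * b); rewrite tofracM tofracXn -E exprD; ring.
by exists (f ^+ m * b'); rewrite tofracM tofracXn -E' exprD; ring.
Qed.

Lemma lift_poly (q : {poly K}) : (forall i, exists b, q`_i = t b) ->
  exists r, q = map_poly t r.
Proof.
move=> H.
have H' : forall i, exists b, t b == q`_i by move=> i; have [b ->] := H i; exists b.
exists (\poly_(i < size q) xchoose (H' i)).
apply/polyP => i; rewrite coef_map coef_poly.
case: ifP => hi; first by symmetry; exact: (eqP (xchooseP (H' i))).
by rewrite nth_default; [exact: esym (tofrac0 _) | rewrite leqNgt hi].
Qed.

Lemma key (hB : normal_domain B) f (Q : {poly K}) y :
  Q \is monic -> (forall i, Dn f Q`_i) -> root Q y -> Dn f y.
Proof.
move=> mQ HQ rQ.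
set s := size Q; set d := s.-1.
have s0 : (0 < s)%N by rewrite /s size_poly_gt0 monic_neq0.
have Qd : Q`_d = 1 by have := monicP mQ; rewrite lead_coefE.
have [M HM] := D_unif f (fun i => Q`_i) s HQ.
set G := t f ^+ M.
set Q' := \poly_(i < s) (Q`_i * G ^+ (d - i)).
have Q'c : forall i, exists b, Q'`_i = t b.
  move=> i; rewrite coef_poly; case: ifP => hi; last by exists 0; rewrite tofrac0.
  have : (i <= d)%N by rewrite /d -ltnS prednK.
  rewrite leq_eqVlt => /orP [/eqP ->|hid].
    by exists 1; rewrite subnn expr0 mulr1 Qd tofrac1.
  have [b Eb] := HM i hi.
  have -> : (d - i = (d - i).-1.+1)%N by rewrite prednK // subn_gt0.
  exists (b * (f ^+ M) ^+ (d - i).-1).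
  by rewrite exprS mulrA [_ * G]mulrC Eb tofracM !tofracXn.
have [r Er] := lift_poly _ Q'c.
have sQ' : size Q' = s.
  by apply: size_poly_eq; rewrite -/d subnn expr0 mulr1 Qd oner_neq0.
have lQ' : lead_coef Q' = 1.
  by rewrite lead_coefE sQ' coef_poly -/d prednK // leqnn subnn expr0 mulr1 Qd.
have mr : r \is monic.
  apply/monicP; apply: t_inj; rewrite tofrac1 -lead_coef_map_inj //; last exact: t_inj.
  by rewrite -Er.
have rt : root (map_poly t r) (G * y).
  rewrite -Er /root horner_poly.
  rewrite (eq_bigr (fun i : 'I_s => G ^+ d * (Q`_i * y ^+ i))).
    by rewrite -mulr_sumr -horner_coef (eqP rQ) mulr0.
  move=> i _; have hi : (i <= d)%N by rewrite /d -ltnS prednK.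
  by rewrite exprMn -{2}(subnK hi) exprD; ring.
have [b Eb] := hB _ (ex_intro2 _ _ r mr rt).
by exists M, b.
Qed.

End Aux.

Theorem lemma1p11 (R : comNzRingType) (A B : idomainType)
    (iA : {rmorphism R -> A}) (iB : {rmorphism R -> B})
    (hA : finite_expansion iA) (hB : normal_domain B)
    (p : {pred B}) (hp_ideal : idealr_closed p) (hp_prime : prime_idealr_closed p)
    (phi : {rmorphism A -> {fraction B}})
    (phi_loc : forall a : A, in_loc_prime p (phi a))
    (phi_R : forall r : R, phi (iA r) = FracField.tofrac (iB r)) :
  exists2 f : B, f \notin p & forall a : A, in_loc_elem f (phi a).
Proof.
case: hA => n [a ha].
case: hp_ideal => p0 p1 _.
have ex : forall i, exists bs : B * B, (bs.2 \notin p) &&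
    (phi (a i) == FracField.tofrac bs.1 / FracField.tofrac bs.2).
  move=> i; have [b [s [hs E]]] := phi_loc (a i).
  by exists (b, s); rewrite /= hs E eqxx.
pose bs i := xchoose (ex i).
have bsP : forall i, (bs i).2 \notin p /\
    phi (a i) = FracField.tofrac (bs i).1 / FracField.tofrac (bs i).2.
  by move=> i; have /andP [h1 /eqP h2] := xchooseP (ex i).
have nz : forall x, x \notin p -> x != 0.
  by move=> x hx; apply: contraNneq hx => ->.
pose f := \prod_(i < n) (bs i).2.
have fp : f \notin p.
  apply: (big_ind (fun x => x \notin p)) => //.
    move=> x y hx hy; apply/negP => /hp_prime /orP [h|h].
      by rewrite h in hx. by rewrite h in hy.
  by move=> i _; case: (bsP i).
exists f => //.
have Dvar : forall i, Dn B f (phi (a i)).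
  move=> i; case: (bsP i) => hs ->.
  exists 1%N, ((bs i).1 * \prod_(j < n | j != i) (bs j).2).
  rewrite /f (bigD1 i) //= expr1 !tofracM.
  have : FracField.tofrac (bs i).2 != 0 by rewrite tofrac_eq0 nz.
  move=> h; field.
  exact: h.
have Dgen : forall x, gen_subalg iA a x -> Dn B f (phi x).
  move=> x; elim => [r|i|x1 y1 _ IHx _ IHy|x1 _ IH|x1 y1 _ IHx _ IHy].
  - by rewrite phi_R; apply: D_t.
  - exact: Dvar.
  - by rewrite rmorphD; apply: D_add.
  - by rewrite rmorphN; apply: D_opp.
  - by rewrite rmorphM; apply: D_mul.
move=> x; have [q [mq cq] rq] := ha x.
have : Dn B f (phi x).
  apply: (@key B hB f (map_poly phi q)).
  - exact: monic_map.
  - by move=> i; rewrite coef_map; apply: Dgen.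
  - exact: rmorph_root.
move=> [m [b E]]; exists b, m.
have h : FracField.tofrac f ^+ m != 0 by rewrite expf_neq0 // tofrac_eq0 nz.
by rewrite tofracXn -E mulrC mulKf.
Qed.
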